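(* Let $\mathbb N$ be a strongly connected symmetric directed graph on $m$ vertices without self-arcs, with arc matrices $C_{ij}$ (each with $n$ columns) having orthonormal rows (so $C_{ij}C_{ij}'=I$), such that $\bar{\mathbb N}$ is well-configured. Let $d_i=|\mathcal N_i|$. For arbitrary $x_i(0)\in\mathbb R^n$, define for each agent $i$ $$x_i(t+1)=x_i(t)-\frac{1}{2(d_i+1)}\sum_{j\in\mathcal N_i}\big(C_{ij}'C_{ij}+C_{ji}'C_{ji}\big)\big(x_i(t)-x_j(t)\big).$$ Then all $x_i(t)$ converge to a common vector $x^*\in\mathbb R^n$ exponentially fast, i.e. there are constants $c>0$, $\rho\in[0,1)$ with $\|x_i(t)-x^*\|\le c\rho^t$ for all $i,t$.
   Context: A directed graph is symmetric if whenever $(i,j)$ is an arc so is $(j,i)$. $\mathcal N_i$ is the set of neighbors of agent $i$. Each arc $(j,i)$ carries a real matrix $C_{ji}$ with $n$ columns; $'$ denotes transpose. $\bar{\mathbb N}$ is well-configured if for all $x_1,\dots,x_m\in\mathbb R^n$, $C_{ji}x_i=C_{ji}x_j$ for every arc $(j,i)$ implies $x_1=\cdots=x_m$. *)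

(* Defs.v *)
From HB Require Import structures.
From mathcomp Require Import all_boot all_order all_algebra.
From mathcomp Require Import reals.
Set Implicit Arguments. Unset Strict Implicit. Unset Printing Implicit Defensive.
Import Order.TTheory GRing.Theory Num.Theory.
Local Open Scope ring_scope.

Definition vnorm (R : realType) (n : nat) (v : 'cV[R]_n) : R :=
  Num.sqrt (\sum_(k < n) v k 0 ^+ 2).

(* Directed graph on 'I_m given by arc relation adj : adj j i means arc (j,i). *)
Definition symmetric_graph (m : nat) (adj : rel 'I_m) : Prop :=
  forall i j, adj i j -> adj j i.

Definition no_self_arcs (m : nat) (adj : rel 'I_m) : Prop :=
  forall i, ~~ adj i i.

Definition strongly_connected (m : nat) (adj : rel 'I_m) : Prop :=
  forall i j, connect adj i j.

Definition nbrs (m : nat) (adj : rel 'I_m) (i : 'I_m) : {set 'I_m} :=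
  [set j | adj j i].

(* Well-configured: C_{ji} x_i = C_{ji} x_j on every arc (j,i) forces consensus.
   C j i is the matrix on arc (j,i), with rows j i rows and n columns. *)
Definition well_configured (R : realType) (m n : nat) (adj : rel 'I_m)
    (rows : 'I_m -> 'I_m -> nat) (C : forall j i : 'I_m, 'M[R]_(rows j i, n)) : Prop :=
  forall x : 'I_m -> 'cV[R]_n,
    (forall j i, adj j i -> C j i *m x i = C j i *m x j) ->
    forall i j, x i = x j.

(* Main.v *)
Require Import Defs.
From HB Require Import structures.
From mathcomp Require Import all_boot all_order all_algebra.
From mathcomp Require Import reals.
From mathcomp Require Import ring lra.
From Stdlib Require Import FunctionalExtensionality.
Import Order.TTheory GRing.Theory Num.Theory VectorInternalTheory.
Set Implicit Arguments. Unset Strict Implicit. Unset Printing Implicit Defensive.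
Local Open Scope ring_scope.

Definition bilin (R : realType) (V : lmodType R) (b : V -> V -> R) :=
  [/\ forall u u' v, b (u + u') v = b u v + b u' v,
      forall c u v, b (c *: u) v = c * b u v &
      forall u v, b u v = b v u].

Lemma bilin_sumL (R : realType) (V : lmodType R) (b : V -> V -> R) (I : Type) (r : seq I) (P : pred I) (F : I -> V) v :
  bilin b -> b (\sum_(i <- r | P i) F i) v = \sum_(i <- r | P i) b (F i) v.
Proof.
case=> bD bZ _.
have b0 : b 0 v = 0 by rewrite -(scale0r (0:V)) bZ mul0r.
by rewrite (big_morph (fun u => b u v) (fun u u' => bD u u' v) b0).
Qed.

Lemma bilin_expand (R : realType) d (b : 'rV[R]_d -> 'rV[R]_d -> R) u v :
  bilin b -> b u v = \sum_a \sum_c u 0 a * v 0 c * b (delta_mx 0 a) (delta_mx 0 c).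
Proof.
move=> hb; have [_ bZ bS] := hb.
rewrite {1}(row_sum_delta u) bilin_sumL //; apply: eq_bigr => a _.
rewrite bZ bS {1}(row_sum_delta v) bilin_sumL // big_distrr; apply: eq_bigr => c _.
by rewrite bZ bS; exact: mulrA.
Qed.

Lemma sq_le_sum (R : realType) d (u : 'rV[R]_d) a : u 0 a ^+ 2 <= \sum_c u 0 c ^+ 2.
Proof.
rewrite (bigD1 a) //= lerDl; apply: sumr_ge0 => c _; exact: sqr_ge0.
Qed.

Lemma prod_le (R : realType) (p q s : R) : p ^+ 2 <= s -> q ^+ 2 <= s -> `|p * q| <= s.
Proof.
move=> hp hq; have h1 : 0 <= (p - q) ^+ 2 by apply: sqr_ge0.
have h2 : 0 <= (p + q) ^+ 2 by apply: sqr_ge0.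
move: hp hq h1 h2; rewrite !expr2 => hp hq h1 h2.
case: (lerP 0 (p * q)) => h; [rewrite ger0_norm // | rewrite ltr0_norm //]; nra.
Qed.

Lemma quad_bound (R : realType) d (u : 'rV[R]_d) (X : 'M[R]_d) :
  \sum_a \sum_c u 0 a * u 0 c * X a c <=
  (\sum_a \sum_c `|X a c|) * \sum_c u 0 c ^+ 2.
Proof.
rewrite big_distrl; apply: ler_sum => a _; rewrite big_distrl; apply: ler_sum => c _.
have := prod_le (sq_le_sum u a) (sq_le_sum u c).
set s := \sum_c _ => h.
apply: le_trans (ler_norm _) _.
rewrite normrM mulrC; apply: ler_pM => //.
Qed.

Lemma quad_expand (R : realType) d (u v : 'rV[R]_d) (X : 'M[R]_d) :
  (u *m X *m v^T) 0 0 = \sum_a \sum_c u 0 a * v 0 c * X a c.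
Proof.
rewrite mxE exchange_big; apply: eq_bigr => c _; rewrite !mxE big_distrl.
apply: eq_bigr => a _; rewrite ?mxE /=; ring.
Qed.

Lemma bilin_lin (R : realType) (V : lmodType R) (b : V -> V -> R) y c u w :
  bilin b -> b (y + c *: u) w = b y w + c * b u w.
Proof. by case=> bD bZ _; rewrite bD bZ. Qed.

Lemma coercive_rV (R : realType) d (b : 'rV[R]_d -> 'rV[R]_d -> R) :
  bilin b -> (forall u, u != 0 -> 0 < b u u) ->
  exists K, 0 < K /\ forall u : 'rV[R]_d, \sum_c u 0 c ^+ 2 <= K * b u u.
Proof.
move=> hb bpos; have [bD bZ bS] := hb.
pose P := \matrix_(a, c) b (delta_mx 0 a) (delta_mx 0 c).
have bP : forall u v, b u v = (u *m P *m v^T) 0 0.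
  move=> u v; rewrite bilin_expand // quad_expand.
  by apply: eq_bigr => a _; apply: eq_bigr => c _; rewrite mxE.
have b0 : forall u, 0 <= b u u.
  move=> u; have [->|nz] := eqVneq u 0; last exact: ltW (bpos _ nz).
  by rewrite bP !mul0mx mxE.
have Punit : P \in unitmx.
  rewrite -row_free_unit -kermx_eq0; apply/negPn/negP => nz.
  have [i hi] : exists i, row i (kermx P) != 0.
    apply/existsP; move: nz; apply: contraR; rewrite negb_exists => /forallP h.
    by apply/eqP/row_matrixP => i; rewrite row0; apply/eqP; apply/negPn; apply: h.
  by have := bpos _ hi; rewrite bP -row_mul mulmx_ker row0 mul0mx mxE ltxx.
pose Q := invmx P; pose K0 := \sum_a \sum_c `|Q^T a c|.
have K0ge : 0 <= K0 by apply: sumr_ge0 => a _; apply: sumr_ge0.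
exists (K0 + 1); split; first by lra.
move=> u; pose y := u *m Q; set s := \sum_c _.
have s0 : 0 <= s by apply: sumr_ge0 => c _; apply: sqr_ge0.
have yP : y *m P = u by rewrite /y /Q mulmxKV.
have e1 : b y u = s.
  rewrite bP yP mxE; apply: eq_bigr => c _; rewrite !mxE expr2 //.
have e2 : b u y = s by rewrite bS.
have e3 : b y y <= K0 * s.
  rewrite bP yP /y trmx_mul mulmxA quad_expand; exact: quad_bound.
have := b0 (y + (- (K0 + 1)) *: u).
rewrite bilin_lin // (bS y) bilin_lin // (bS u (y + _)) bilin_lin // e1 e2 => h.
nra.
Qed.

Lemma coercive_vect (R : realType) (V : vectType R) (b g : V -> V -> R) :
  bilin b -> bilin g -> (forall u, u != 0 -> 0 < b u u) ->
  exists lam, 0 < lam /\ forall u, lam * g u u <= b u u.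
Proof.
move=> hb hg bpos.
pose br z w := b (r2v z) (r2v w).
pose gr z w := g (r2v z) (r2v w).
have hbr : bilin br.
  have [bD bZ bS] := hb; split => *; rewrite /br ?linearD ?linearZ //=.
have hgr : bilin gr.
  have [bD bZ bS] := hg; split => *; rewrite /gr ?linearD ?linearZ //=.
have brpos : forall z, z != 0 -> 0 < br z z.
  move=> z nz; apply: bpos; apply/negP => /eqP h; apply: (negP nz); apply/eqP.
  by apply: r2v_inj; rewrite h linear0.
have [K [K0 HK]] := coercive_rV hbr brpos.
pose G := \matrix_(a, c) gr (delta_mx 0 a) (delta_mx 0 c).
pose G0 := \sum_a \sum_c `|G a c|.
have G0ge : 0 <= G0 by apply: sumr_ge0 => a _; apply: sumr_ge0.
have M0 : 0 < (G0 + 1) * K by apply: mulr_gt0 => //; lra.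
exists ((G0 + 1) * K)^-1; split; first by rewrite invr_gt0.
move=> u; have Hu : g u u <= ((G0 + 1) * K) * b u u.
  have := HK (v2r u); rewrite /br v2rK => h1.
  have : gr (v2r u) (v2r u) <= G0 * \sum_c (v2r u) 0 c ^+ 2.
    rewrite bilin_expand //.
    have -> : \sum_a \sum_c (v2r u) 0 a * (v2r u) 0 c * gr 'e_a 'e_c =
              \sum_a \sum_c (v2r u) 0 a * (v2r u) 0 c * G a c.
      by apply: eq_bigr => a _; apply: eq_bigr => c _; rewrite mxE.
    exact: quad_bound.
  rewrite /gr v2rK => h2.
  have s0 : 0 <= \sum_c (v2r u) 0 c ^+ 2 by apply: sumr_ge0 => c _; apply: sqr_ge0.
  have b0 : 0 <= b u u.
    have [->|nz] := eqVneq u 0; last exact: ltW (bpos _ nz).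
    have [bD bZ _] := hb; by rewrite -(scale0r (0:V)) bZ mul0r.
  nra.
rewrite -[leRHS](mulKf (lt0r_neq0 M0)).
by apply: ler_wpM2l => //; rewrite invr_ge0 ltW.
Qed.

Definition dot (R : realType) k (u v : 'cV[R]_k) : R := (u^T *m v) 0 0.

Lemma dotE (R : realType) k (u v : 'cV[R]_k) : dot u v = \sum_a u a 0 * v a 0.
Proof. by rewrite /dot mxE; apply: eq_bigr => a _; rewrite mxE. Qed.

Lemma dotC (R : realType) k (u v : 'cV[R]_k) : dot u v = dot v u.
Proof. by rewrite !dotE; apply: eq_bigr => a _; rewrite mulrC. Qed.

Lemma dot_bilin (R : realType) k : bilin (@dot R k).
Proof.
split.
- by move=> u u' v; rewrite !dotE -big_split; apply: eq_bigr => a _; rewrite mxE mulrDl.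
- by move=> c u v; rewrite !dotE big_distrr; apply: eq_bigr => a _; rewrite mxE /=; ring.
- exact: dotC.
Qed.

Lemma dotDl (R : realType) k (u u' v : 'cV[R]_k) : dot (u + u') v = dot u v + dot u' v.
Proof. by case: (dot_bilin R k). Qed.
Lemma dotZl (R : realType) k c (u v : 'cV[R]_k) : dot (c *: u) v = c * dot u v.
Proof. by case: (dot_bilin R k). Qed.
Lemma dotDr (R : realType) k (u u' v : 'cV[R]_k) : dot v (u + u') = dot v u + dot v u'.
Proof. by rewrite dotC dotDl !(dotC v). Qed.
Lemma dotZr (R : realType) k c (u v : 'cV[R]_k) : dot v (c *: u) = c * dot v u.
Proof. by rewrite dotC dotZl (dotC v). Qed.
Lemma dotNl (R : realType) k (u v : 'cV[R]_k) : dot (- u) v = - dot u v.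
Proof. by rewrite -scaleN1r dotZl mulN1r. Qed.
Lemma dotNr (R : realType) k (u v : 'cV[R]_k) : dot v (- u) = - dot v u.
Proof. by rewrite dotC dotNl dotC. Qed.
Lemma dotBl (R : realType) k (u u' v : 'cV[R]_k) : dot (u - u') v = dot u v - dot u' v.
Proof. by rewrite dotDl dotNl. Qed.
Lemma dotBr (R : realType) k (u u' v : 'cV[R]_k) : dot v (u - u') = dot v u - dot v u'.
Proof. by rewrite dotDr dotNr. Qed.

Lemma dot_ge0 (R : realType) k (u : 'cV[R]_k) : 0 <= dot u u.
Proof. by rewrite dotE; apply: sumr_ge0 => a _; rewrite -expr2 sqr_ge0. Qed.

Lemma dot_eq0 (R : realType) k (u : 'cV[R]_k) : dot u u = 0 -> u = 0.
Proof.
rewrite dotE => h; apply/matrixP => a b; rewrite (ord1 b) mxE.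
move: h; under eq_bigr do rewrite -expr2.
move=> h'; have := @psumr_eq0P _ _ predT (fun c => u c 0 ^+ 2) (fun c _ => sqr_ge0 (u c 0)) h' a isT.
by move/eqP; rewrite sqrf_eq0 => /eqP.
Qed.

Lemma dotMC (R : realType) k l (u : 'cV[R]_k) (A : 'M[R]_(k, l)) v :
  dot u (A *m v) = dot (A^T *m u) v.
Proof. by rewrite /dot trmx_mul trmxK mulmxA. Qed.

Lemma dot_sumL (R : realType) k (I : finType) (P : pred I) (F : I -> 'cV[R]_k) v :
  dot (\sum_(i | P i) F i) v = \sum_(i | P i) dot (F i) v.
Proof. exact: bilin_sumL (dot_bilin R k). Qed.
Lemma dot_sumR (R : realType) k (I : finType) (P : pred I) (F : I -> 'cV[R]_k) v :
  dot v (\sum_(i | P i) F i) = \sum_(i | P i) dot v (F i).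
Proof. by rewrite dotC dot_sumL; apply: eq_bigr => i _; rewrite dotC. Qed.

Lemma dot_sum_CS (R : realType) k (I : finType) (A : pred I) (F : I -> 'cV[R]_k) :
  dot (\sum_(j in A) F j) (\sum_(j in A) F j) <= #|A|%:R * \sum_(j in A) dot (F j) (F j).
Proof.
rewrite dot_sumL.
have H : forall j l, dot (F j) (F l) <= (dot (F j) (F j) + dot (F l) (F l)) / 2.
  move=> j l; have := dot_ge0 (F j - F l).
  rewrite dotBl !dotBr (dotC (F l) (F j)) => h; lra.
have E : \sum_(j in A) dot (F j) (\sum_(l in A) F l) =
          \sum_(j in A) \sum_(l in A) dot (F j) (F l).
  by apply: eq_bigr => j _; rewrite dot_sumR.
rewrite E; apply: le_trans (ler_sum _ (fun j _ => ler_sum _ (fun l _ => H j l))) _.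
under eq_bigr do rewrite -mulr_suml big_split /= sumr_const.
rewrite -mulr_suml big_split /= sumrMnl sumr_const -mulr_natl.
set S := \sum_(i in A) _; rewrite -mulr_natl mulr1; set N := #|A|%:R; lra.
Qed.

Section Graph.
Variables (R : realType) (m n : nat) (adj : rel 'I_m) (rows : 'I_m -> 'I_m -> nat).
Variable (C : forall j i : 'I_m, 'M[R]_(rows j i, n)).
Hypothesis symA : symmetric_graph adj.
Hypothesis orth : forall i j, adj i j -> C i j *m (C i j)^T = 1%:M.

Definition Mx i j : 'M[R]_n := (C i j)^T *m C i j + (C j i)^T *m C j i.

Lemma Mx_swap i j : Mx j i = Mx i j.
Proof. by rewrite /Mx addrC. Qed.

Lemma Mx_tr i j : (Mx i j)^T = Mx i j.
Proof. by rewrite /Mx linearD /= !trmx_mul !trmxK. Qed.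

Lemma proj_dot k (A : 'M[R]_(k, n)) v : dot v ((A^T *m A) *m v) = dot (A *m v) (A *m v).
Proof. by rewrite -mulmxA dotMC trmxK. Qed.

Lemma proj_sq k (A : 'M[R]_(k, n)) v : A *m A^T = 1%:M ->
  dot ((A^T *m A) *m v) ((A^T *m A) *m v) = dot v ((A^T *m A) *m v).
Proof.
move=> h; rewrite dotMC trmx_mul trmxK mulmxA.
have e : A^T *m A *m A^T *m A = A^T *m A by rewrite -(mulmxA (A^T)) h mulmx1.
by rewrite mulmxA e dotC.
Qed.

Lemma Mx_pos i j v : dot v (Mx i j *m v) = dot (C i j *m v) (C i j *m v) + dot (C j i *m v) (C j i *m v).
Proof. by rewrite /Mx mulmxDl dotDr !proj_dot. Qed.

Lemma Mx_ge0 i j v : 0 <= dot v (Mx i j *m v).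
Proof. by rewrite Mx_pos addr_ge0 // dot_ge0. Qed.

Lemma Mx_sq i j v : adj j i ->
  dot (Mx i j *m v) (Mx i j *m v) <= 2 * dot v (Mx i j *m v).
Proof.
move=> hji; have hij := symA hji.
set a := (C i j)^T *m C i j *m v; set b := (C j i)^T *m C j i *m v.
have ea : dot a a = dot v a by rewrite proj_sq // orth.
have eb : dot b b = dot v b by rewrite proj_sq // orth.
have -> : Mx i j *m v = a + b by rewrite /Mx mulmxDl.
have := dot_ge0 (a - b).
rewrite !dotDl !dotDr ?dotNl ?dotNr (dotC b a) ea eb => h; lra.
Qed.

Lemma adj_sym a b : adj a b = adj b a.
Proof. by apply/idP/idP => /symA. Qed.

Lemma swap_sum (V : nmodType) (F : 'I_m -> 'I_m -> V) :
  \sum_i \sum_(j in nbrs adj i) F i j = \sum_i \sum_(j in nbrs adj i) F j i.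
Proof.
rewrite /nbrs; under eq_bigr do rewrite big_mkcond.
under [RHS]eq_bigr do rewrite big_mkcond.
rewrite [RHS]exchange_big; apply: eq_bigr => a _; apply: eq_bigr => b _.
by rewrite !inE adj_sym.
Qed.

Definition w i : R := (#|nbrs adj i| + 1)%:R.
Definition gg (e : 'I_m -> 'cV[R]_n) i := \sum_(j in nbrs adj i) Mx i j *m (e i - e j).
Definition qq (e : 'I_m -> 'cV[R]_n) i j := dot (e i - e j) (Mx i j *m (e i - e j)).
Definition Lq (e : 'I_m -> 'cV[R]_n) := \sum_i \sum_(j in nbrs adj i) qq e i j.
Definition nrm2 (e : 'I_m -> 'cV[R]_n) := \sum_i w i * dot (e i) (e i).

Lemma gg_sum e : \sum_i gg e i = 0.
Proof.
have h0 : \sum_i gg e i = \sum_i \sum_(j in nbrs adj i) - (Mx i j *m (e i - e j)).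
  rewrite /gg swap_sum; apply: eq_bigr => i _; apply: eq_bigr => j _.
  by rewrite (Mx_swap i j) -mulmxN opprB.
set S := \sum_i gg e i.
have h : S = - S.
  rewrite {1}/S h0 /S -sumrN; apply: eq_bigr => i _; by rewrite /gg -sumrN.
have : S *+ 2 = 0 by rewrite mulr2n {1}h addNr.
rewrite -scaler_nat => /eqP; rewrite scaler_eq0 pnatr_eq0 /= => /eqP //.
Qed.

Lemma qq_ge0 e i j : 0 <= qq e i j.
Proof. exact: Mx_ge0. Qed.

Lemma Lq_ge0 e : 0 <= Lq e.
Proof. by apply: sumr_ge0 => i _; apply: sumr_ge0 => j _; apply: qq_ge0. Qed.

Lemma eg_sum e : \sum_i dot (e i) (gg e i) = Lq e / 2.
Proof.
pose F i j := dot (e i) (Mx i j *m (e i - e j)).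
have E1 : \sum_i dot (e i) (gg e i) = \sum_i \sum_(j in nbrs adj i) F i j.
  by apply: eq_bigr => i _; rewrite /gg dot_sumR.
have E2 : Lq e = \sum_i \sum_(j in nbrs adj i) F i j + \sum_i \sum_(j in nbrs adj i) F j i.
  rewrite -big_split; apply: eq_bigr => i _; rewrite -big_split; apply: eq_bigr => j _.
  rewrite /qq /F dotBl (Mx_swap i j) -(opprB (e i)) mulmxN dotNr /=; ring.
rewrite E1 E2 -swap_sum; by field.
Qed.

Lemma energy_i e i :
  w i * dot (e i - ((2 * (#|nbrs adj i| + 1))%:R)^-1 *: gg e i)
            (e i - ((2 * (#|nbrs adj i| + 1))%:R)^-1 *: gg e i)
  <= w i * dot (e i) (e i) - dot (e i) (gg e i)
     + (m%:R / (2 * (m%:R + 1))) * \sum_(j in nbrs adj i) qq e i j.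
Proof.
set Q := \sum_(j in nbrs adj i) qq e i j.
have hQ : 0 <= Q by apply: sumr_ge0 => j _; apply: qq_ge0.
set d : R := #|nbrs adj i|%:R; set M : R := m%:R.
have hg : dot (gg e i) (gg e i) <= d * (2 * Q).
  apply: le_trans (dot_sum_CS _ _) _; apply: ler_wpM2l; first by rewrite ler0n.
  rewrite /Q mulr_sumr; apply: ler_sum => j hj; apply: Mx_sq.
  by move: hj; rewrite inE.
have hdm : d <= M by rewrite ler_nat; apply: leq_trans (max_card _) _; rewrite card_ord.
have hd : 0 <= d by rewrite ler0n.
have hw : w i = d + 1 by rewrite /w natrD.
rewrite hw natrM natrD -/d.
set s := (_ ^-1).
have hs : s * (2 * (d + 1)) = 1 by rewrite mulVf // mulf_neq0 // ?pnatr_eq0 // lt0r_neq0 // ltr_wpDl.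
have s0 : 0 < s by rewrite invr_gt0 mulr_gt0 // ltr_wpDl.
rewrite dotBl !dotBr !dotZl !dotZr (dotC (gg e i) (e i)).
set xx := dot (e i) (e i); set xg := dot (e i) (gg e i); set G := dot (gg e i) (gg e i).
have G0 : 0 <= G by apply: dot_ge0.
have hds : (d + 1) * s = 1 / 2 by lra.
have k1 : (d + 1) * (s * (s * G)) <= s * d * Q.
  have -> : (d + 1) * (s * (s * G)) = (d + 1) * s * (s * G) by ring.
  rewrite hds; have := ler_wpM2l (ltW s0) hg; rewrite -/G; lra.
have k2 : s * d <= M / (2 * (M + 1)).
  rewrite ler_pdivlMr; last by rewrite mulr_gt0 // ltr_wpDl // ler0n.
  have h3 : 0 <= s * (M - d) by apply: mulr_ge0; [exact: ltW | rewrite subr_ge0].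
  nra.
have k3 : s * d * Q <= M / (2 * (M + 1)) * Q by apply: ler_wpM2r.
have k4 : (d + 1) * (s * xg + s * xg) = xg.
  have -> : (d + 1) * (s * xg + s * xg) = (d + 1) * s * 2 * xg by ring.
  by rewrite hds; field.
nra.
Qed.

Lemma energy e (e' : 'I_m -> 'cV[R]_n) :
  (forall i, e' i = e i - ((2 * (#|nbrs adj i| + 1))%:R)^-1 *: gg e i) ->
  nrm2 e' <= nrm2 e - (2 * (m%:R + 1))^-1 * Lq e.
Proof.
move=> he; rewrite /nrm2.
under eq_bigr do rewrite he.
apply: le_trans (ler_sum _ (fun i _ => energy_i e i)) _.
rewrite big_split /= sumrB eg_sum -mulr_sumr -/(Lq e).
have hL := Lq_ge0 e.
set M : R := m%:R.
have M0 : 0 <= M by rewrite ler0n.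
have -> : M / (2 * (M + 1)) = 1/2 - (2 * (M + 1))^-1.
  by field; rewrite lt0r_neq0 // ltr_wpDl.
set t := (2 * (M + 1))^-1; set S := \sum_(i < m) _; set L := Lq e; nra.
Qed.

Definition Sw (a : 'I_m -> 'cV[R]_n) := \sum_i w i *: a i.
Definition Bb (a b : 'I_m -> 'cV[R]_n) :=
  \sum_i \sum_(j in nbrs adj i) dot (a i - a j) (Mx i j *m (b i - b j)) + dot (Sw a) (Sw b).
Definition Bn (a b : 'I_m -> 'cV[R]_n) := \sum_i w i * dot (a i) (b i).

Lemma w_gt0 i : 0 < w i.
Proof. by rewrite /w addn1 ltr0Sn. Qed.

Lemma Bb_bilin : bilin (fun u v : {ffun 'I_m -> 'cV[R]_n} => Bb u v).
Proof.
split.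
- move=> u u' v; rewrite /Bb addrACA -big_split /=; congr (_ + _).
    apply: eq_bigr => i _; rewrite -big_split; apply: eq_bigr => j _ /=.
    by rewrite !ffunE -dotDl opprD addrACA.
  rewrite -dotDl /Sw -big_split; congr (dot _ _); apply: eq_bigr => i _.
  by rewrite ffunE scalerDr.
- move=> c u v; rewrite /Bb mulrDr mulr_sumr; congr (_ + _).
    apply: eq_bigr => i _; rewrite mulr_sumr; apply: eq_bigr => j _ /=.
    by rewrite !ffunE -scalerBr dotZl.
  rewrite -dotZl /Sw scaler_sumr; congr (dot _ _); apply: eq_bigr => i _.
  by rewrite ffunE !scalerA mulrC.
- move=> u v; rewrite /Bb dotC; congr (_ + _); apply: eq_bigr => i _.
  apply: eq_bigr => j _; by rewrite dotMC Mx_tr dotC.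
Qed.

Lemma Bn_bilin : bilin (fun u v : {ffun 'I_m -> 'cV[R]_n} => Bn u v).
Proof.
split.
- move=> u u' v; rewrite /Bn -big_split; apply: eq_bigr => i _ /=.
  by rewrite ffunE dotDl mulrDr.
- move=> c u v; rewrite /Bn mulr_sumr; apply: eq_bigr => i _ /=.
  by rewrite ffunE dotZl mulrCA.
- by move=> u v; rewrite /Bn; apply: eq_bigr => i _; rewrite dotC.
Qed.

Lemma Bb_ee e : Bb e e = Lq e + dot (Sw e) (Sw e).
Proof. by []. Qed.

Lemma Bb_zero e : well_configured adj C -> Bb e e = 0 -> forall i, e i = 0.
Proof.
move=> wc; rewrite Bb_ee => h0.
have hL := Lq_ge0 e; have hS := dot_ge0 (Sw e).
have hL0 : Lq e = 0 by lra.
have hS0 : Sw e = 0 by apply: dot_eq0; lra.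
have hq : forall i j, j \in nbrs adj i -> qq e i j = 0.
  move=> i j hj.
  have H1 : forall i0, true -> 0 <= \sum_(j0 in nbrs adj i0) qq e i0 j0.
    by move=> i0 _; apply: sumr_ge0 => j0 _; apply: qq_ge0.
  have hi := psumr_eq0P H1 hL0 (i := i) isT.
  exact: (psumr_eq0P (fun j _ => qq_ge0 e i j) hi hj).
have hc : forall j i, adj j i -> C j i *m e i = C j i *m e j.
  move=> j i hji; have := hq i j; rewrite inE => /(_ hji).
  rewrite /qq Mx_pos => h.
  have h1 := dot_ge0 (C i j *m (e i - e j)); have h2 := dot_ge0 (C j i *m (e i - e j)).
  have : dot (C j i *m (e i - e j)) (C j i *m (e i - e j)) = 0 by lra.
  by move/dot_eq0; rewrite mulmxBr => /eqP; rewrite subr_eq0 => /eqP.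
have heq := wc e hc.
move=> i; move: hS0; rewrite /Sw.
under eq_bigr do rewrite (heq _ i).
rewrite -scaler_suml => /eqP; rewrite scaler_eq0 => /orP [|/eqP //].
have : 0 < \sum_i0 w i0.
  rewrite (bigD1 i) //=; apply: ltr_wpDr; first by apply: sumr_ge0 => *; exact: ltW (w_gt0 _).
  exact: w_gt0.
by move=> /lt0r_neq0 /negbTE ->.
Qed.

End Graph.

Lemma sqrtX (R : realType) (r : R) t : 0 <= r -> Num.sqrt (r ^+ t) = Num.sqrt r ^+ t.
Proof.
move=> r0; elim: t => [|t IH]; first by rewrite !expr0 sqrtr1.
by rewrite !exprS sqrtrM // IH.
Qed.

Theorem theorem5 (R : realType) (m n : nat) (adj : rel 'I_m)
    (rows : 'I_m -> 'I_m -> nat) (C : forall j i : 'I_m, 'M[R]_(rows j i, n))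
    (x : nat -> 'I_m -> 'cV[R]_n) :
  symmetric_graph adj ->
  no_self_arcs adj ->
  strongly_connected adj ->
  (forall i j, adj i j -> C i j *m (C i j)^T = 1%:M) ->
  well_configured adj C ->
  (forall t i,
     x t.+1 i =
       x t i -
       ((2 * (#|nbrs adj i| + 1))%:R)^-1 *:
         \sum_(j in nbrs adj i)
            ((C i j)^T *m C i j + (C j i)^T *m C j i) *m (x t i - x t j)) ->
  exists xstar : 'cV[R]_n, exists c : R, exists rho : R,
    0 < c /\ 0 <= rho < 1 /\
    forall (i : 'I_m) (t : nat), vnorm (x t i - xstar) <= c * rho ^+ t.
Proof.
move=> symA _ _ orth wc hx.
have [m0|mpos] := posnP m.
  exists 0, 1, 0; split; first exact: ltr01.
  split; first by rewrite lexx ltr01.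
  by case=> i hi; exfalso; move: hi; rewrite m0.
pose s (i : 'I_m) : R := ((2 * (#|nbrs adj i| + 1))%:R)^-1.
have hx' : forall t i, x t.+1 i = x t i - s i *: gg adj C (x t) i by [].
have ws : forall i, w R adj i * s i = 1 / 2.
  move=> i; rewrite /w /s natrM; field.
  by rewrite natr1 pnatr_eq0.
pose W := \sum_i w R adj i.
have W0 : 0 < W.
  rewrite /W (bigD1 (Ordinal mpos)) //=; apply: ltr_wpDr; first by apply: sumr_ge0 => *; apply: ltW; apply: w_gt0.
  by apply: w_gt0.
have inv : forall t, Sw adj (x t) = Sw adj (x 0).
  elim=> [//|t IH]; rewrite -IH /Sw.
  under eq_bigr do rewrite hx' scalerBr scalerA ws.
  by rewrite sumrB -scaler_sumr gg_sum // scaler0 subr0.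
pose xbar := W^-1 *: Sw adj (x 0).
pose e t i := x t i - xbar.
have Se : forall t, Sw adj (e t) = 0.
  move=> t; rewrite /Sw /e.
  under eq_bigr do rewrite scalerBr.
  rewrite sumrB -/(Sw adj (x t)) inv -scaler_suml -/W /xbar scalerA mulfV ?lt0r_neq0 //.
  by rewrite scale1r subrr.
have ge : forall t i, gg adj C (e t) i = gg adj C (x t) i.
  move=> t i; apply: eq_bigr => j _; rewrite /e; congr (_ *m _).
  by rewrite opprB addrA subrK.
have he : forall t i, e t.+1 i = e t i - s i *: gg adj C (e t) i.
  by move=> t i; rewrite ge /e hx' addrAC.
have pd : forall u : {ffun 'I_m -> 'cV[R]_n}, u != 0 -> 0 < Bb adj C u u.
  move=> u nz; have h0 : 0 <= Bb adj C u u by rewrite Bb_ee addr_ge0 ?Lq_ge0 ?dot_ge0.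
  rewrite lt_neqAle h0 andbT; apply/negP => /eqP h; apply/negP: nz.
  rewrite negbK; apply/eqP; apply/ffunP => i; rewrite ffunE; exact: Bb_zero wc (esym h) i.
have [lam [lam0 Hlam]] := coercive_vect (Bb_bilin adj C) (Bn_bilin R n adj) pd.
have Hl : forall t, lam * nrm2 adj (e t) <= Lq adj C (e t).
  move=> t; have := Hlam [ffun i => e t i].
  have -> : ([ffun i => e t i] : 'I_m -> 'cV[R]_n) = e t.
    by apply: functional_extensionality => i; rewrite ffunE.
  rewrite Bb_ee Se /dot trmx0 mul0mx mxE addr0; exact.
have n2ge : forall e' : 'I_m -> 'cV[R]_n, 0 <= nrm2 adj e'.
  move=> e'; rewrite /nrm2; apply: sumr_ge0 => i _; apply: mulr_ge0; [exact: ltW (w_gt0 _ _ _)|exact: dot_ge0].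
pose kap : R := (2 * (m%:R + 1))^-1.
have kap0 : 0 < kap by rewrite invr_gt0 mulr_gt0 // ltr_wpDl // ler0n.
pose r := Num.max (1 - kap * lam) 0.
have r0 : 0 <= r by rewrite le_max lexx orbT.
have r1 : r < 1 by rewrite gt_max ltr01 andbT ltrBlDr ltrDl mulr_gt0.
have step : forall t, nrm2 adj (e t.+1) <= r * nrm2 adj (e t).
  move=> t; have := energy symA orth (he t); rewrite -/kap => h1.
  have h2 := Hl t; have h3 := n2ge (e t); have h4 : 1 - kap * lam <= r by rewrite le_max lexx.
  have h5 := ler_wpM2r h3 h4.
  nra.
pose N0 := nrm2 adj (e 0%N).
have decay : forall t, nrm2 adj (e t) <= r ^+ t * N0.
  elim=> [|t IH]; first by rewrite expr0 mul1r.
  apply: le_trans (step t) _; rewrite exprS -mulrA; exact: ler_wpM2l.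
exists xbar, (Num.sqrt N0 + 1), (Num.sqrt r); split.
  by apply: ltr_wpDl => //; exact: sqrtr_ge0.
split; first by rewrite sqrtr_ge0 /= -sqrtr1 ltr_sqrt.
move=> i t; rewrite /vnorm.
have -> : \sum_(k < n) (x t i - xbar) k 0 ^+ 2 = dot (e t i) (e t i).
  by rewrite dotE; apply: eq_bigr => k _; rewrite expr2.
have hi : dot (e t i) (e t i) <= nrm2 adj (e t).
  rewrite /nrm2 (bigD1 i) //=; apply: ler_wpDr.
    by apply: sumr_ge0 => j _; apply: mulr_ge0; [exact: ltW (w_gt0 _ _ _)|exact: dot_ge0].
  rewrite -[X in X <= _]mul1r; apply: ler_wpM2r; first exact: dot_ge0.
  by rewrite /w ler1n addn1.
apply: le_trans (ler_wsqrtr (le_trans hi (decay t))) _.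
rewrite sqrtrM ?exprn_ge0 // sqrtX // mulrC; apply: ler_wpM2r.
  by rewrite exprn_ge0 // sqrtr_ge0.
by rewrite lerDl.
Qed.
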